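(* Let $R$ and $S$ be commutative rings with identity, $f:R\to S$ a ring homomorphism, and $J$ a nonzero proper ideal of $S$. (1) If $J\subseteq\operatorname{Nil}(S)$, then $R\bowtie^f J$ is compactly packed if and only if $R$ is compactly packed. (2) For any $R$-module $M$, the trivial extension $R\ltimes M$ is compactly packed if and only if $R$ is compactly packed.
   Context: $R\bowtie^f J:=\{(r,f(r)+j)\mid r\in R,\ j\in J\}$, a subring of $R\times S$. $\operatorname{Nil}(S)$ is the nilradical of $S$. The trivial extension $R\ltimes M$ is the ring $R\oplus M$ with multiplication $(r,m)(r',m')=(rr',rm'+r'm)$. A commutative ring $A$ is compactly packed if whenever an ideal $I$ of $A$ is contained in the union of a family $\{\mathfrak{p}_i\}_i$ of prime ideals of $A$, then $I\subseteq\mathfrak{p}_i$ for some $i$. *)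

(* Defs.v *)
From HB Require Import structures.
From mathcomp Require Import all_boot all_order all_algebra.
From mathcomp Require Import boolp ring.
Set Implicit Arguments. Unset Strict Implicit. Unset Printing Implicit Defensive.
Import GRing.Theory.
Local Open Scope ring_scope.

Definition is_ideal (A : comPzRingType) (I : A -> Prop) : Prop :=
  [/\ I 0, (forall x y, I x -> I y -> I (x - y)) & (forall a x, I x -> I (a * x))].

Definition is_prime_ideal (A : comPzRingType) (P : A -> Prop) : Prop :=
  [/\ is_ideal P, ~ P 1 & (forall x y, P (x * y) -> P x \/ P y)].

Definition compactly_packed (A : comPzRingType) : Prop :=
  forall (I : A -> Prop) (Idx : Type) (p : Idx -> A -> Prop),
    is_ideal I -> (forall i, is_prime_ideal (p i)) ->
    (forall x, I x -> exists i, p i x) ->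
    exists i, forall x, I x -> p i x.

Definition nilradical (S : comPzRingType) (x : S) : Prop := exists n : nat, x ^+ n = 0.

Definition amalg_pred (R S : comPzRingType) (f : {rmorphism R -> S}) (J : S -> Prop)
  : pred (R * S)%type := fun x => `[< exists r j, J j /\ x = (r, f r + j) >].

Record amalg (R S : comPzRingType) (f : {rmorphism R -> S}) (J : S -> Prop)
    (HJ : is_ideal J) := Amalg {
  amalg_val : (R * S)%type;
  amalg_valP : amalg_val \in amalg_pred f J }.

Section AmalgRing.
Variables (R S : comPzRingType) (f : {rmorphism R -> S}) (J : S -> Prop) (HJ : is_ideal J).

Lemma amalg_predE x : (x \in amalg_pred f J) <-> J (x.2 - f x.1).
Proof.
rewrite /in_mem /= /amalg_pred; split.
  move=> /asboolP [r [j [Jj ->]]] /=; by rewrite addrC addKr.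
move=> Jx; apply/asboolP; exists x.1, (x.2 - f x.1); split => //.
by case: x Jx => a b /= _; rewrite addrC subrK.
Qed.

Lemma amalg_subring : subring_closed (amalg_pred f J).
Proof.
case: HJ => J0 JB JM.
split.
- apply/amalg_predE; rewrite /= rmorph1 subrr //.
- move=> x y /amalg_predE Jx /amalg_predE Jy; apply/amalg_predE => /=.
  have -> : x.2 - y.2 - f (x.1 - y.1) = (x.2 - f x.1) - (y.2 - f y.1).
    by rewrite rmorphB /=; ring.
  exact: JB.
- move=> x y /amalg_predE Jx /amalg_predE Jy; apply/amalg_predE => /=.
  have -> : x.2 * y.2 - f (x.1 * y.1)
          = x.2 * (y.2 - f y.1) - (0 - (f y.1 * (x.2 - f x.1))).
    by rewrite rmorphM /=; ring.
  apply: (JB); first exact: JM.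
  by apply: (JB) => //; apply: JM.
Qed.

HB.instance Definition _ := [isSub for @amalg_val R S f J HJ].
HB.instance Definition _ := [Choice of amalg f HJ by <:].
HB.instance Definition _ :=
  GRing.SubChoice_isSubComPzRing.Build (R * S)%type (amalg_pred f J) (amalg f HJ) amalg_subring.
End AmalgRing.

Definition triv_ext (R : comPzRingType) (M : lmodType R) : Type := (R * M)%type.

Section TrivExt.
Variables (R : comPzRingType) (M : lmodType R).
Local Notation T := (triv_ext M).
HB.instance Definition _ := GRing.Zmodule.on T.

Definition te_one : T := (1, 0).
Definition te_mul (x y : T) : T := (x.1 * y.1, x.1 *: y.2 + y.1 *: x.2).

Lemma te_mulA : associative te_mul.
Proof.
move=> [a m] [b n] [c p]; rewrite /te_mul /=.
rewrite !scalerDr !scalerA (@mulrA R) [c * a](@mulrC R) [c * b](@mulrC R) addrA.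
done.
Qed.

Lemma te_mulC : commutative te_mul.
Proof. by move=> [a m] [b n]; rewrite /te_mul /= mulrC addrC. Qed.

Lemma te_mul1 : left_id te_one te_mul.
Proof. by move=> [a m]; rewrite /te_mul /te_one /= mul1r scale1r scaler0 addr0. Qed.

Lemma te_mulDl : left_distributive te_mul +%R.
Proof.
move=> [a m] [b n] [c p]; rewrite /te_mul /=; congr pair; first by rewrite mulrDl.
by rewrite scalerDl scalerDr !addrA; congr (_ + _); rewrite addrAC.
Qed.

HB.instance Definition _ := GRing.Zmodule_isComPzRing.Build T te_mulA te_mulC te_mul1 te_mulDl.
End TrivExt.

(* Main.v *)
Require Import Defs.
From HB Require Import structures.
From mathcomp Require Import all_boot all_order all_algebra.
From mathcomp Require Import boolp.
Import GRing.Theory.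
Local Open Scope ring_scope.
Set Implicit Arguments. Unset Strict Implicit.

Lemma prime_pow (A : comPzRingType) (P : A -> Prop) (x : A) n :
  is_prime_ideal P -> P (x ^+ n) -> P x.
Proof.
case=> _ P1 PM; elim: n => [|n IH]; first by rewrite expr0 => /P1.
by rewrite exprS => /PM [|/IH].
Qed.

Lemma prime_nil (A : comPzRingType) (P : A -> Prop) (x : A) n :
  is_prime_ideal P -> x ^+ n = 0 -> P x.
Proof.
move=> HP Hn; apply: (prime_pow (n:=n) HP); rewrite Hn.
by case: HP => [[]].
Qed.

Section Transfer.
Variables (A B : comPzRingType) (pi : A -> B).
Hypotheses (piB : forall x y, pi (x - y) = pi x - pi y)
  (piM : forall x y, pi (x * y) = pi x * pi y) (pi1 : pi 1 = 1)
  (surj : forall b, exists a, pi a = b)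
  (pinil : forall x, pi x = 0 -> exists n, x ^+ n = 0).

Lemma pi0 : pi 0 = 0.
Proof. by rewrite -(subrr 0) piB subrr. Qed.

Lemma preim_ideal (I : B -> Prop) : is_ideal I -> is_ideal (fun x => I (pi x)).
Proof.
case=> I0 IB IM; split; first by rewrite pi0.
- by move=> x y Ix Iy; rewrite piB; apply: IB.
- by move=> a x Ix; rewrite piM; apply: IM.
Qed.

Lemma preim_prime (P : B -> Prop) : is_prime_ideal P -> is_prime_ideal (fun x => P (pi x)).
Proof.
case=> HI P1 PM; split; first exact: preim_ideal.
- by rewrite pi1.
- by move=> x y; rewrite piM => /PM.
Qed.

Lemma prime_kerE (P : A -> Prop) x y : is_prime_ideal P -> pi x = pi y -> P x -> P y.
Proof.
move=> HP Hxy Px.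
have [n Hn] : exists n, (x - y) ^+ n = 0 by apply: pinil; rewrite piB Hxy subrr.
have Pd := prime_nil HP Hn.
case: HP => [[P0 PB PM]] _ _.
have -> : y = x - (x - y) by rewrite subKr.
exact: PB.
Qed.

Lemma im_ideal (I : A -> Prop) : is_ideal I -> is_ideal (fun b => exists a, I a /\ pi a = b).
Proof.
case=> I0 IB IM; split.
- by exists 0; rewrite pi0.
- move=> _ _ [a [Ia <-]] [c [Ic <-]]; exists (a - c); split; [exact: IB|exact: piB].
- move=> r _ [a [Ia <-]]; have [s <-] := surj r.
  by exists (s * a); split; [exact: IM|exact: piM].
Qed.

Lemma im_prime (P : A -> Prop) : is_prime_ideal P ->
  is_prime_ideal (fun b => exists a, P a /\ pi a = b).
Proof.
move=> HP; have HP' := HP; case: HP' => HI P1 PM; split.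
- by apply: im_ideal.
- case=> a [Pa Ha]; apply: P1; apply: (prime_kerE HP _ Pa); by rewrite pi1.
- move=> x y [a [Pa Ha]].
  have [u Hu] := surj x; have [v Hv] := surj y.
  have : P (u * v) by apply: (prime_kerE HP _ Pa); rewrite piM Hu Hv.
  by case/PM => [Pu|Pv]; [left; exists u|right; exists v].
Qed.

Lemma cp_transfer : compactly_packed A <-> compactly_packed B.
Proof.
split.
- move=> cpA I Idx p HI Hp Hcov.
  have [i Hi] := cpA (fun x => I (pi x)) Idx (fun i x => p i (pi x))
    (preim_ideal HI) (fun i => preim_prime (Hp i)) (fun x Ix => Hcov _ Ix).
  exists i => b Ib; have [a Ha] := surj b; rewrite -Ha; apply: Hi; by rewrite Ha.
- move=> cpB I Idx p HI Hp Hcov.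
  have [i Hi] := cpB (fun b => exists a, I a /\ pi a = b) Idx
    (fun i b => exists a, p i a /\ pi a = b) (im_ideal HI) (fun i => im_prime (Hp i))
    (fun b '(ex_intro a (conj Ia Ha)) =>
       let: ex_intro i Hi := Hcov a Ia in ex_intro _ i (ex_intro _ a (conj Hi Ha))).
  exists i => x Ix.
  have [a [Pa Ha]] := Hi (pi x) (ex_intro _ x (conj Ix erefl)).
  exact: (prime_kerE (Hp i) Ha Pa).
Qed.
End Transfer.

Theorem corollary4p4 :
  (forall (R S : comPzRingType) (f : {rmorphism R -> S}) (J : S -> Prop)
          (HJ : is_ideal J),
     (exists j, J j /\ j <> 0) ->          (* J nonzero *)
     (exists s, ~ J s) ->                  (* J proper *)
     (forall x, J x -> nilradical x) ->    (* J ⊆ Nil(S) *)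
     (compactly_packed (amalg f HJ) <-> compactly_packed R))
  /\
  (forall (R : comPzRingType) (M : lmodType R),
     compactly_packed (triv_ext M) <-> compactly_packed R).
Proof.
split.
- move=> R S f J HJ _ _ Jnil.
  apply: (@cp_transfer _ _ (fun x : amalg f HJ => (val x).1)).
  + by move=> x y; rewrite rmorphB.
  + by move=> x y; rewrite rmorphM.
  + by rewrite rmorph1.
  + move=> r.
    have P : (r, f r) \in amalg_pred f J.
      by apply/amalg_predE => /=; rewrite subrr; case: HJ.
    by exists (Sub (r, f r) P).
  + move=> x Hx.
    have Jx : J (val x).2.
      have := amalg_predE f J (val x); case=> + _.
      by move=> /(_ (valP x)); rewrite Hx rmorph0 subr0.
    have [n Hn] := Jnil _ Jx.
    exists n.+1; apply: val_inj.
    have -> : val (x ^+ n.+1) = (val x) ^+ n.+1 by rewrite rmorphXn.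
    have -> : val (0 : amalg f HJ) = 0 by rewrite rmorph0.
    case: (val x) Hx Jx Hn => a b /= -> _ Hn.
    have E : forall k, (0 : R, b) ^+ k.+1 = (0, b ^+ k.+1).
      elim=> [|k IH]; first by rewrite !expr1.
      by rewrite exprS IH /GRing.mul /= /mul_pair /= mul0r -exprS.
    by rewrite E exprS Hn mulr0.
- move=> R M.
  apply: (@cp_transfer _ _ (fun x : triv_ext M => x.1)) => //.
  + move=> r; by exists ((r, 0) : triv_ext M).
  + case=> a m /= ->; exists 2%N.
    by rewrite expr2 /GRing.mul /= /te_mul /= mul0r scale0r addr0.
Qed.
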